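(* Let $x,y\in\mathbb{Q}$ and let $\mathcal{A}$ be the Apollonian disk packing generated by a tricycle whose three disks have signed curvatures $1-y$, $x^2+y^2-y$ and $y$. Then there is a positive integer $N$ such that multiplying all curvatures of the disks of $\mathcal{A}$ by $N$ (i.e. rescaling the packing) yields an integral packing: every disk of the rescaled packing has integer curvature.
   Context: A tricycle is a triple of mutually tangent (generalized) disks (circles or lines, with signed curvatures, a line having curvature $0$ and an enclosing disk having negative curvature). A Descartes configuration is a quadruple of mutually tangent disks, with curvatures satisfying $(a+b+c+d)^2=2(a^2+b^2+c^2+d^2)$. The Apollonian disk packing generated by a tricycle is obtained by recursively completing every tricycle already constructed to a Descartes configuration. The triple $(1-y,\,x^2+y^2-y,\,y)$ is the curvature triple of the tricycle described by the tangency Pauli spinor $(1,\,x+iy)$, i.e. by the two tangency spinors $(1,0)$ and $(x,y)$ issuing from the disk of curvature $y$. *)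

(* Defs.v *)
From HB Require Import structures.
From mathcomp Require Import all_boot all_order all_algebra.
From mathcomp Require Import reals.
Set Implicit Arguments. Unset Strict Implicit. Unset Printing Implicit Defensive.
Import Order.TTheory GRing.Theory Num.Theory.
Local Open Scope ring_scope.

Definition descartes {R : realType} (a b c d : R) : Prop :=
  (a + b + c + d) ^+ 2 = 2 * (a ^+ 2 + b ^+ 2 + c ^+ 2 + d ^+ 2).

(* Curvature quadruples of the Descartes configurations constructed in the
   Apollonian packing generated by a tricycle with curvatures (a, b, c):
   - the tricycle is completed to a Descartes configuration;
   - any tricycle already constructed (any three members of a constructed
     Descartes configuration, up to ordering) is completed to a Descartes
     configuration;
   - the ordering of a configuration is irrelevant (closure under the
     generators (12) and (1234) of S_4). *)
Inductive apollonian_config {R : realType} (a b c : R) : R -> R -> R -> R -> Prop :=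
| ac_base d : descartes a b c d -> apollonian_config a b c a b c d
| ac_complete p q r s s' : apollonian_config a b c p q r s ->
    descartes p q r s' -> apollonian_config a b c p q r s'
| ac_swap p q r s : apollonian_config a b c p q r s ->
    apollonian_config a b c q p r s
| ac_rot p q r s : apollonian_config a b c p q r s ->
    apollonian_config a b c q r s p.

Definition packing_curvature {R : realType} (a b c k : R) : Prop :=
  exists p q r, apollonian_config a b c p q r k.

(* Main.v *)
Require Import Defs.
From HB Require Import structures.
From mathcomp Require Import all_boot all_order all_algebra.
From mathcomp Require Import reals.
From mathcomp Require Import ring.
Import Order.TTheory GRing.Theory Num.Theory.
Local Open Scope ring_scope.

Lemma quad_roots (R : realType) (p q r s s' : R) :
  descartes p q r s -> descartes p q r s' -> s' = s \/ s' = 2 * (p + q + r) - s.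
Proof.
rewrite /descartes => H1 H2.
have : (s' - s) * (s' - (2 * (p + q + r) - s)) = 0.
  have -> : (s' - s) * (s' - (2 * (p + q + r) - s)) =
    ((p + q + r + s) ^+ 2 - 2 * (p ^+ 2 + q ^+ 2 + r ^+ 2 + s ^+ 2))
    - ((p + q + r + s') ^+ 2 - 2 * (p ^+ 2 + q ^+ 2 + r ^+ 2 + s' ^+ 2)) by ring.
  by rewrite H1 H2 !subrr.
by move/eqP; rewrite mulf_eq0 !subr_eq0 => /orP [/eqP ->|/eqP ->]; [left|right].
Qed.

Lemma dswap (R : realType) (p q r s : R) : descartes p q r s -> descartes q p r s.
Proof.
rewrite /descartes => H.
have -> : (q + p + r + s) ^+ 2 = (p + q + r + s) ^+ 2 by ring.
rewrite H; ring.
Qed.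

Lemma drot (R : realType) (p q r s : R) : descartes p q r s -> descartes q r s p.
Proof.
rewrite /descartes => H.
have -> : (q + r + s + p) ^+ 2 = (p + q + r + s) ^+ 2 by ring.
rewrite H; ring.
Qed.

Theorem proposition6 (R : realType) (x y : rat) :
  exists N : nat, (0 < N)%N /\
    forall k : R,
      packing_curvature (ratr (1 - y)) (ratr (x ^+ 2 + y ^+ 2 - y)) (ratr y) k ->
      exists z : int, N%:R * k = z%:~R.
Proof.
set Dx := denq x; set Dy := denq y; set nx := numq x; set ny := numq y.
have hDx : 0 < Dx by apply: denq_gt0.
have hDy : 0 < Dy by apply: denq_gt0.
have ex : nx%:~R = x * Dx%:~R :> rat by rewrite numqE.
have ey : ny%:~R = y * Dy%:~R :> rat by rewrite numqE.
exists `|(Dx * Dy) ^+ 2|%N; split.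
  rewrite absz_gt0 expf_neq0 // mulf_neq0 //; by rewrite gt_eqF.
have hN : (`|(Dx * Dy) ^+ 2|%N)%:R = ((Dx * Dy) ^+ 2)%:~R :> rat.
  rewrite -[LHS]/((`|(Dx * Dy) ^+ 2|%N)%:~R) gez0_abs //.
  by rewrite exprn_ge0 // mulr_ge0 // ltW.
set N := `|(Dx * Dy) ^+ 2|%N.
pose I (t : R) := exists z : int, N%:R * t = z%:~R.
have Iq : forall q : rat, (exists z : int, N%:R * q = z%:~R) -> I (ratr q).
  move=> q [z hz]; exists z.
  by rewrite -(rmorph_nat (ratr : {rmorphism rat -> R})) -rmorphM /= hz rmorph_int.
have ID : forall p q r s, I p -> I q -> I r -> I s -> I (2 * (p + q + r) - s).
  move=> p q r s [zp hp] [zq hq] [zr hr] [zs hs].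
  exists (2 * (zp + zq + zr) - zs).
  rewrite !(rmorphB, rmorphD, rmorphM) /= -hp -hq -hr -hs; ring.
have Ia : I (ratr (1 - y)).
  apply: Iq; exists (Dx ^+ 2 * Dy ^+ 2 - Dx ^+ 2 * Dy * ny).
  rewrite hN !(rmorphB, rmorphD, rmorphM, rmorphXn) /= ey; ring.
have Ib : I (ratr (x ^+ 2 + y ^+ 2 - y)).
  apply: Iq; exists (Dy ^+ 2 * nx ^+ 2 + Dx ^+ 2 * ny ^+ 2 - Dx ^+ 2 * Dy * ny).
  rewrite hN !(rmorphB, rmorphD, rmorphM, rmorphXn) /= ex ey; ring.
have Ic : I (ratr y).
  apply: Iq; exists (Dx ^+ 2 * Dy * ny).
  rewrite hN !(rmorphB, rmorphD, rmorphM, rmorphXn) /= ey; ring.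
have Id : forall e : rat, e = 1 + x ^+ 2 + y ^+ 2 - y + 2 * x \/
                          e = 1 + x ^+ 2 + y ^+ 2 - y - 2 * x -> I (ratr e).
  move=> e [->|->]; apply: Iq.
    exists (Dx ^+ 2 * Dy ^+ 2 + Dy ^+ 2 * nx ^+ 2 + Dx ^+ 2 * ny ^+ 2
            - Dx ^+ 2 * Dy * ny + 2 * Dx * Dy ^+ 2 * nx).
    rewrite hN !(rmorphB, rmorphD, rmorphM, rmorphXn) /= ex ey; ring.
  exists (Dx ^+ 2 * Dy ^+ 2 + Dy ^+ 2 * nx ^+ 2 + Dx ^+ 2 * ny ^+ 2
          - Dx ^+ 2 * Dy * ny - 2 * Dx * Dy ^+ 2 * nx).
  rewrite hN !(rmorphB, rmorphD, rmorphM, rmorphXn) /= ex ey; ring.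
have base : forall d : R, descartes (ratr (1 - y)) (ratr (x ^+ 2 + y ^+ 2 - y)) (ratr y) d -> I d.
  move=> d; rewrite /descartes.
  rewrite !(rmorphB, rmorphD, rmorphM, rmorphXn, rmorph1) /= => H.
  set X := ratr x in H *; set Y := ratr y in H *.
  have : (d - (1 + X ^+ 2 + Y ^+ 2 - Y + 2 * X)) * (d - (1 + X ^+ 2 + Y ^+ 2 - Y - 2 * X)) = 0.
    have -> : (d - (1 + X ^+ 2 + Y ^+ 2 - Y + 2 * X)) * (d - (1 + X ^+ 2 + Y ^+ 2 - Y - 2 * X))
      = - ((1 - Y + (X ^+ 2 + Y ^+ 2 - Y) + Y + d) ^+ 2 -
          2 * ((1 - Y) ^+ 2 + (X ^+ 2 + Y ^+ 2 - Y) ^+ 2 + Y ^+ 2 + d ^+ 2)) by ring.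
    by rewrite H subrr oppr0.
  move/eqP; rewrite mulf_eq0 !subr_eq0 => /orP [/eqP ->|/eqP ->].
    have := Id (1 + x ^+ 2 + y ^+ 2 - y + 2 * x) (or_introl erefl).
    by rewrite !(rmorphB, rmorphD, rmorphM, rmorphXn, rmorph1, rmorph_nat).
  have := Id (1 + x ^+ 2 + y ^+ 2 - y - 2 * x) (or_intror erefl).
  by rewrite !(rmorphB, rmorphD, rmorphM, rmorphXn, rmorph1, rmorph_nat).
have inv : forall p q r s, apollonian_config (ratr (1 - y)) (ratr (x ^+ 2 + y ^+ 2 - y)) (ratr y) p q r s ->
    [/\ I p, I q, I r, I s & descartes p q r s].
  move=> p q r s; elim.
  - by move=> d Hd; split=> //; apply: base.
  - move=> p' q' r' s0 s1 _ [h1 h2 h3 h4 Hs0] Hd.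
    split=> //.
    by case: (@quad_roots _ _ _ _ _ _ Hs0 Hd) => ->; [|apply: ID].
  - move=> ? ? ? ? _ [h1 h2 h3 h4 H]; split=> //.
    exact: dswap.
  - move=> ? ? ? ? _ [h1 h2 h3 h4 H]; split=> //.
    exact: drot.
move=> k [p [q [r /inv [_ _ _ //]]]].
Qed.
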